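(* Let $L \geq 1$ and $1 \leq n < L$, and suppose $p_k>0$ and $q_k>0$ for all $1\le k\le n$. Then the continuous-time Markov chain on $\Omega_{L,n}$ described in the context is irreducible; equivalently, the chain on $\mathcal{A}_{L,n}$ is irreducible.
   Context: Particle labels $k$ are taken modulo $n$ (in $\{1,\dots,n\}$), positions modulo $L$. $\Omega_{L,n}$ is the set of words $w_1\cdots w_L$ on the ring $\mathbb{Z}/L\mathbb{Z}$ over the alphabet $\{\bullet_1,\dots,\bullet_n,\Box_1,\dots,\Box_n\}$ in which each $\bullet_k$ occurs exactly once, the letters $\bullet_1,\dots,\bullet_n$ appear in this cyclic order around the ring, and the remaining $L-n$ letters are arbitrary $\Box_i$'s. The chain has transitions (displayed segments are consecutive positions on the ring, the rest unchanged, $C$ a possibly empty word in the $\Box$-letters only): (T1) $\bullet_k\Box_i \to \Box_i\bullet_k$ at rate $p_k$, if $i\neq k$; (T2) $\bullet_{k-1}\,C\,\bullet_k\Box_k \to \bullet_{k-1}\Box_{k-1}\,C\,\bullet_k$ at rate $p_k$; (T3) $\Box_i\bullet_k \to \bullet_k\Box_i$ at rate $q_k$, if $i\neq k$; (T4) $\Box_k\bullet_k\,C\,\bullet_{k+1} \to \bullet_k\,C\,\Box_{k+1}\bullet_{k+1}$ at rate $q_k$. $\mathcal{A}_{L,n}$ is the set of arrays with $n$ rows (indexed mod $n$) and $L$ columns (indexed mod $L$) with entries in $\{\cdot,\bullet,\Box\}$, exactly one $\bullet$ per row, exactly one non-$\cdot$ entry per column, and the columns of the $\bullet$'s in rows $1,\dots,n$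 cyclically increasing; it is identified with $\Omega_{L,n}$ by letting $w_j=\bullet_k$ (resp. $\Box_k$) when the particle in column $j$ is a $\bullet$ (resp. $\Box$) in row $k$, and carries the transported dynamics. *)

(* Defs.v *)
From mathcomp Require Import all_boot all_order all_algebra.
Set Implicit Arguments. Unset Strict Implicit. Unset Printing Implicit Defensive.
Import GRing.Theory Num.Theory.

(* Letters: (true, k) = bullet_k, (false, k) = box_k.  Labels are shifted:
   the paper's label k in {1..n} is our k-1 in {0..n-1}.  Positions on the
   ring Z/LZ are natural numbers read modulo L = size w. *)
Definition letter := (bool * nat)%type.
Definition bul (k : nat) : letter := (true, k).
Definition box (k : nat) : letter := (false, k).

Definition at_ (w : seq letter) (j : nat) : letter := nth (false, 0%N) w (j %% size w).

Definition predl (n k : nat) : nat := (k + n.-1) %% n.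
Definition succl (n k : nat) : nat := k.+1 %% n.

Definition bullet_labels (w : seq letter) : seq nat := [seq x.2 | x <- w & x.1].

Definition Omega (L n : nat) (w : seq letter) : bool :=
  [&& size w == L,
      all (fun x => x.2 < n) w,
      all (fun k => count_mem (bul k) w == 1) (iota 0 n) &
      [exists r : 'I_n.+1, bullet_labels w == rot r (iota 0 n)]].

Definition off (L x m : nat) : nat := (m %% L + L - x %% L) %% L.
(* positive distance from x forward to y, in {1..L} (equal to L iff x = y mod L) *)
Definition distp (L x y : nat) : nat := ((y %% L + L - x %% L).-1 %% L).+1.
Definition inside (L x y m : nat) : bool := (0 < off L x m) && (off L x m < distp L x y).

Definition swap_at (w : seq letter) (j : nat) : seq letter :=
  let L := size w in
  mkseq (fun m => if m == j %% L then at_ w j.+1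
                  else if m == j.+1 %% L then at_ w j else at_ w m) L.

(* (T1) bullet_k box_i -> box_i bullet_k, i <> k, bullet_k at position j *)
Definition T1 (w : seq letter) (k j : nat) : option (seq letter) :=
  if [&& at_ w j == bul k, ~~ (at_ w j.+1).1 & (at_ w j.+1).2 != k]
  then Some (swap_at w j) else None.

(* (T3) box_i bullet_k -> bullet_k box_i, i <> k, box_i at position j *)
Definition T3 (w : seq letter) (k j : nat) : option (seq letter) :=
  if [&& ~~ (at_ w j).1, (at_ w j).2 != k & at_ w j.+1 == bul k]
  then Some (swap_at w j) else None.

(* (T2) bullet_{k-1} C bullet_k box_k -> bullet_{k-1} box_{k-1} C bullet_k,
   bullet_k at position b, bullet_{k-1} at position a:
   new letter at b+1 is bullet_k, at a+1 is box_{k-1}, the block strictly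
   between a+1 and b+1 is the old block shifted by one step forward. *)
Definition T2 (n : nat) (w : seq letter) (k b : nat) : option (seq letter) :=
  let L := size w in
  if (at_ w b == bul k) && (at_ w b.+1 == box k) then
    let a := index (bul (predl n k)) w in
    Some (mkseq (fun m =>
      if m == b.+1 %% L then bul k
      else if m == a.+1 %% L then box (predl n k)
      else if inside L a.+1 b.+1 m then at_ w (m + L).-1
      else at_ w m) L)
  else None.

(* (T4) box_k bullet_k C bullet_{k+1} -> bullet_k C box_{k+1} bullet_{k+1},
   box_k at position x, bullet_{k+1} at position c, y = c - 1:
   new letter at x is bullet_k, at y is box_{k+1}, the block strictly between
   x and y is the old block shifted by one step backward. *)
Definition T4 (n : nat) (w : seq letter) (k x : nat) : option (seq letter) :=
  let L := size w in
  if (at_ w x == box k) && (at_ w x.+1 == bul k) then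
    let c := index (bul (succl n k)) w in
    let y := (c + L).-1 in
    Some (mkseq (fun m =>
      if m == x %% L then bul k
      else if m == y %% L then box (succl n k)
      else if inside L x y m then at_ w m.+1
      else at_ w m) L)
  else None.

Definition rate (R : numDomainType) (p q : nat -> R) (n : nat)
    (w w' : seq letter) : R :=
  (\sum_(k < n) \sum_(j < size w)
     (p k *+ (T1 w k j == Some w') + p k *+ (T2 n w k j == Some w')
      + q k *+ (T3 w k j == Some w') + q k *+ (T4 n w k j == Some w')))%R.

Definition ctmc_irreducible (R : numDomainType) (L n : nat) (p q : nat -> R) : Prop :=
  forall x y, Omega L n x -> Omega L n y ->
    exists s : seq (seq letter),
      [&& path (fun a b => (0 < rate p q n a b)%R) x s,
          all (Omega L n) s & last x s == y].

(* Main.v *)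
Require Import Defs.
From mathcomp Require Import all_boot all_order all_algebra.
From mathcomp Require Import zify.
From Stdlib Require Import FunctionalExtensionality.
Import Order.TTheory GRing.Theory Num.Theory.
Set Implicit Arguments. Unset Strict Implicit. Unset Printing Implicit Defensive.

(* Proof of irreducibility: every configuration is connected,
   by moves that can be reversed, to a canonical configuration whose rotations
   are all mutually reachable. *)

Lemma modS_mod m L : (m %% L).+1 %% L = m.+1 %% L.
Proof. by rewrite -addn1 modnDml addn1. Qed.

Lemma eqmodS L m i : 0 < L -> m < L -> (m.+1 %% L == i.+1 %% L) = (m == i %% L).
Proof.
move=> L0 mL.
have := eqn_modDr 1 m i L; rewrite !addn1 => ->.
by rewrite (modn_small mL).
Qed.

Lemma off_lt L x m : 0 < L -> off L x m < L.
Proof. by move=> L0; rewrite /off ltn_pmod. Qed.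

Lemma off_spec L x m : 0 < L -> (x + off L x m) %% L = m %% L.
Proof.
move=> L0; rewrite /off modnDmr -modnDml.
have h : x %% L < L by rewrite ltn_pmod.
have -> : x %% L + (m %% L + L - x %% L) = m %% L + L by lia.
by rewrite modnDr modn_mod.
Qed.

Lemma off_uniq L x m d : 0 < L -> d < L -> (x + d) %% L = m %% L -> off L x m = d.
Proof.
move=> L0 dL h.
have h2 := off_spec x m L0.
rewrite -h in h2.
move/eqP: h2; rewrite eqn_modDl (modn_small dL) modn_small ?off_lt //.
by move/eqP.
Qed.

Lemma off_modl L x m : off L (x %% L) m = off L x m.
Proof. by rewrite /off modn_mod. Qed.
Lemma off_modr L x m : off L x (m %% L) = off L x m.
Proof. by rewrite /off modn_mod. Qed.

Lemma offS L x m : 0 < L -> off L x.+1 m.+1 = off L x m.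
Proof.
move=> L0; apply: off_uniq => //; first exact: off_lt.
by rewrite addSn -modS_mod off_spec // modS_mod.
Qed.

Lemma distpE L x y : 0 < L -> distp L x y = (off L x (y + L.-1)).+1.
Proof.
move=> L0; congr S; symmetry; apply: off_uniq => //; first by rewrite ltn_pmod.
rewrite modnDmr {1}(divn_eq x L) -addnA modnMDl.
have h1 : x %% L < L by rewrite ltn_pmod.
have h2 : y %% L < L by rewrite ltn_pmod.
have -> : x %% L + (y %% L + L - x %% L).-1 = y %% L + L.-1 by lia.
by rewrite modnDml.
Qed.

Lemma insideE L x y m : 0 < L ->
  inside L x y m = (0 < off L x m) && (off L x m <= off L x (y + L.-1)).
Proof. by move=> L0; rewrite /inside distpE. Qed.

Lemma inside_modl L x y m : 0 < L -> inside L (x %% L) y m = inside L x y m.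
Proof. by move=> L0; rewrite !insideE // !off_modl. Qed.

Lemma inside_modm L x y m : 0 < L -> inside L x y (m %% L) = inside L x y m.
Proof. by move=> L0; rewrite !insideE // off_modr. Qed.

Lemma inside_mody L x y m : 0 < L -> inside L x (y %% L) m = inside L x y m.
Proof.
move=> L0; rewrite !insideE //.
by rewrite -(off_modr L x (y %% L + _)) modnDml off_modr.
Qed.

Lemma insideS L x y m : 0 < L -> inside L x.+1 y.+1 m.+1 = inside L x y m.
Proof.
by move=> L0; rewrite !insideE // !offS // addSn offS.
Qed.

Lemma at_mod w j : at_ w (j %% size w) = at_ w j.
Proof. by rewrite /at_ modn_mod. Qed.

Lemma at_modS w j : at_ w (j %% size w).+1 = at_ w j.+1.
Proof. by rewrite /at_ modS_mod. Qed.

Lemma nth_rot1 (T : Type) (x0 : T) (w : seq T) i : i < size w ->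
  nth x0 (rot 1 w) i = nth x0 w (i.+1 %% size w).
Proof.
case: w => [//|x w] /= iL.
rewrite /rot /= drop0 take0 cats1 nth_rcons.
case: (ltnP i (size w)) => h.
  by rewrite modn_small.
have -> : i = size w by lia.
by rewrite eqxx modnn.
Qed.

Lemma at_rot1 w j : 0 < size w -> at_ (rot 1 w) j = at_ w j.+1.
Proof.
move=> L0; rewrite /at_ size_rot nth_rot1 ?ltn_pmod // modS_mod //.
Qed.

Lemma rot1_mkseq (T : Type) (f : nat -> T) L : 0 < L ->
  rot 1 (mkseq f L) = mkseq (fun m => f (m.+1 %% L)) L.
Proof.
move=> L0; apply: (@eq_from_nth _ (f 0)); first by rewrite size_rot !size_mkseq.
move=> i; rewrite size_rot size_mkseq => iL.
by rewrite nth_rot1 ?size_mkseq // !nth_mkseq // ltn_pmod.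
Qed.

Lemma eq_in_mkseq' (T : Type) (f g : nat -> T) L :
  (forall m, m < L -> f m = g m) -> mkseq f L = mkseq g L.
Proof.
by move=> h; rewrite /mkseq; apply/eq_in_map => m; rewrite mem_iota add0n => /andP[_ /h].
Qed.

Lemma swap_at_mod w j : swap_at w (j %% size w) = swap_at w j.
Proof. by rewrite /swap_at modn_mod modS_mod at_modS at_mod. Qed.

Lemma T1_mod w k j : T1 w k (j %% size w) = T1 w k j.
Proof. by rewrite /T1 at_mod at_modS swap_at_mod. Qed.

Lemma T3_mod w k j : T3 w k (j %% size w) = T3 w k j.
Proof. by rewrite /T3 at_mod at_modS swap_at_mod. Qed.

Lemma T4_mod n w k j : 0 < size w -> T4 n w k (j %% size w) = T4 n w k j.
Proof.
move=> L0; rewrite /T4 at_mod at_modS modn_mod.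
case: ifP => // _; congr Some; apply: eq_in_mkseq' => m _.
by rewrite inside_modl.
Qed.

Lemma swap_at_rot w j : 0 < size w -> swap_at (rot 1 w) j = rot 1 (swap_at w j.+1).
Proof.
move=> L0; rewrite /swap_at size_rot rot1_mkseq //; apply: eq_in_mkseq' => m mL.
rewrite !eqmodS // !at_rot1 //; case: ifP => // _; case: ifP => // _.
by rewrite /at_ modn_mod.
Qed.

Lemma T1_rot w k j : 0 < size w -> T1 (rot 1 w) k j = omap (rot 1) (T1 w k j.+1).
Proof.
by move=> L0; rewrite /T1 !at_rot1 // swap_at_rot //; case: ifP.
Qed.

Lemma T3_rot w k j : 0 < size w -> T3 (rot 1 w) k j = omap (rot 1) (T3 w k j.+1).
Proof.
by move=> L0; rewrite /T3 !at_rot1 // swap_at_rot //; case: ifP.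
Qed.

Lemma index_rot1 (T : eqType) (a : T) w : count_mem a w = 1 ->
  index a (rot 1 w) = if index a w == 0 then (size w).-1 else (index a w).-1.
Proof.
case: w => [//|x w] /= hc.
rewrite /rot /= drop0 take0 cats1 -cats1 index_cat.
case: eqP hc => [<-|ne] /= hc.
  have : x \notin w by rewrite -has_pred1 has_count; lia.
  by move/negPf => ->; rewrite /= eqxx addn0.
have -> : a \in w by rewrite -has_pred1 has_count; lia.
by [].
Qed.

Lemma T4_rot n w k x : 0 < size w -> count_mem (bul (succl n k)) w = 1 ->
  T4 n (rot 1 w) k x = omap (rot 1) (T4 n w k x.+1).
Proof.
move=> L0 hc; rewrite /T4 !at_rot1 // size_rot.
case: ifP => // _ /=; congr Some.
rewrite rot1_mkseq //; apply: eq_in_mkseq' => m mL.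
set L := size w.
set c := index _ w.
have cL : c < L by rewrite /c index_mem -has_pred1 has_count; lia.
set c' := index _ (rot 1 w).
have ey : ((c + L).-1) %% L = ((c' + L).-1).+1 %% L.
  rewrite /c' index_rot1 // -/c -/L.
  case: eqP => [->|nz].
    rewrite add0n; have -> : ((L.-1 + L).-1).+1 = L.-1 + L by lia.
    by rewrite modnDr.
  have -> : ((c.-1 + L).-1).+1 = (c + L).-1 by lia.
  by [].
have ei : inside L x.+1 (c + L).-1 m.+1 = inside L x (c' + L).-1 m.
  by rewrite -(inside_mody _ _ _ L0) ey inside_mody // insideS.
rewrite !eqmodS // inside_modm // ei -/L ey eqmodS //.
rewrite !at_rot1 // -/L; case: ifP => // _; case: ifP => // _.
by rewrite /at_ -/L modS_mod modn_mod.
Qed.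

Lemma at_small w j : j < size w -> at_ w j = nth (false, 0) w j.
Proof. by move=> h; rewrite /at_ modn_small. Qed.

Lemma swap_at_block (u v : seq letter) a b :
  swap_at (u ++ a :: b :: v) (size u) = u ++ b :: a :: v.
Proof.
set w := u ++ _.
have sw : size w = size u + (size v).+2 by rewrite /w size_cat.
apply: (@eq_from_nth _ (false, 0)); first by rewrite size_mkseq sw size_cat.
move=> i; rewrite size_mkseq => iL; rewrite nth_mkseq //.
rewrite sw !modn_small; try lia.
rewrite !at_small ?sw; try lia.
rewrite /w !nth_cat.
have [h|h|h] := ltngtP i (size u).
- have -> : (i == (size u).+1) = false by lia.
  by [].
- case: eqP => [->|ne]; first by rewrite ?ltnn subSnn ?subnn.
  have -> : i - size u = (i - size u - 2).+2 by lia.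
  by [].
- by rewrite h ?ltnn ?subnn /= ?subSnn ltnNge leqnSn.
Qed.

Lemma T3_block (u v : seq letter) b k : b != k ->
  T3 (u ++ box b :: bul k :: v) k (size u) = Some (u ++ bul k :: box b :: v).
Proof.
move=> bk; rewrite /T3 swap_at_block.
have sw : size (u ++ box b :: bul k :: v) = size u + (size v).+2 by rewrite size_cat.
rewrite !at_small ?sw; try lia.
by rewrite !nth_cat ltnn subnn ltnNge leqnSn /= subSnn /= bk eqxx.
Qed.

Lemma T1_block (u v : seq letter) b k : b != k ->
  T1 (u ++ bul k :: box b :: v) k (size u) = Some (u ++ box b :: bul k :: v).
Proof.
move=> bk; rewrite /T1 swap_at_block.
have sw : size (u ++ bul k :: box b :: v) = size u + (size v).+2 by rewrite size_cat.
rewrite !at_small ?sw; try lia.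
by rewrite !nth_cat ltnn subnn ltnNge leqnSn /= subSnn /= bk eqxx.
Qed.

Lemma bul_notin_box k C : bul k \notin map box C.
Proof. by apply/mapP => -[c _]. Qed.

Lemma T4_block n k (C : seq nat) (V : seq letter) : succl n k != k ->
  T4 n (box k :: bul k :: map box C ++ bul (succl n k) :: V) k 0 =
  Some (bul k :: map box C ++ box (succl n k) :: bul (succl n k) :: V).
Proof.
move=> hk; set ks := succl n k; set w := box k :: _.
have sw : size w = (size C + size V).+3 by rewrite /w /= size_cat size_map /=; lia.
set L := size w.
have L0 : 0 < L by rewrite /L sw.
have ci : index (bul (succl n k)) w = (size C).+2.
  rewrite /w /=.
  have -> : (bul k == bul ks) = false by rewrite /bul xpair_eqE eq_sym (negbTE hk).
  by rewrite /= index_cat (negbTE (bul_notin_box _ _)) size_map /= eqxx addn0.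
rewrite /T4 ci !at_small -/L ?sw // /= !eqxx /=; congr Some.
have ey : ((size C).+1 + L) %% L = (size C).+1.
  by rewrite modnDr modn_small // /L sw; lia.
have eo : forall m, m < L -> off L 0 m = m.
  by move=> m mL; apply: off_uniq => //; rewrite add0n.
have eo2 : off L 0 (((size C).+1 + L) + L.-1) = size C.
  apply: off_uniq => //; first by rewrite /L sw; lia.
  have -> : ((size C).+1 + L) + L.-1 = size C + L + L by lia.
  by rewrite !modnDr.
apply: (@eq_from_nth _ (false, 0)).
  by rewrite size_mkseq /L sw /= size_cat /= size_map !addnS.
move=> m; rewrite size_mkseq => mL; rewrite nth_mkseq // ey insideE // eo // eo2.
rewrite (modn_small L0).
case: m mL => [|m] mL; first by [].
have sL : L = (size C + size V).+3 by rewrite /L sw.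
rewrite /=.
have [h|h|h] := ltngtP m (size C).
- have -> : (m.+1 == (size C).+1) = false by lia.
  rewrite at_small; last by lia.
  by rewrite /w /= !nth_cat size_map h.
- have -> : (m.+1 == (size C).+1) = false by lia.
  rewrite at_small; last by lia.
  case: m mL h => [|m] mL h; first by lia.
  rewrite /w /= !nth_cat size_map.
  have -> : m < size C = false by lia.
  have -> : m.+1 < size C = false by lia.
  by rewrite subSn.
- by rewrite h eqxx nth_cat size_map ltnn subnn.
Qed.

Lemma T4_block1 (C : seq nat) :
  T4 1 (box 0 :: bul 0 :: map box C) 0 0 = Some (bul 0 :: map box C ++ [:: box 0]).
Proof.
set w := box 0 :: _.
have sw : size w = (size C).+2 by rewrite /w /= size_map.
set L := size w.
have L0 : 0 < L by rewrite /L sw.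
have ci : index (bul (succl 1 0)) w = 1 by [].
rewrite /T4 ci !at_small -/L ?sw // /=; congr Some.
have -> : succl 1 0 = 0 by [].
have ey : (0 + L) %% L = 0 by rewrite add0n modnn.
have eo : forall m, m < L -> off L 0 m = m.
  by move=> m mL; apply: off_uniq => //; rewrite add0n.
have eo2 : off L 0 ((0 + L) + L.-1) = L.-1.
  apply: off_uniq; [done| lia |].
  have -> : (0 + L) + L.-1 = L.-1 + L by lia.
  by rewrite modnDr.
apply: (@eq_from_nth _ (false, 0)); first by rewrite size_mkseq /L sw /= size_cat /= size_map addn1.
move=> m; rewrite size_mkseq => mL; rewrite nth_mkseq // ey insideE // eo // eo2.
rewrite (modn_small L0).
case: m mL => [|m] mL; first by [].
rewrite /=.
have -> : m < L.-1 by lia.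
have sL : L = (size C).+2 by rewrite /L sw.
case: (ltnP m.+2 L) => h.
  rewrite at_small; last by lia.
  by rewrite /w /= nth_cat size_map; have -> : m < size C by lia.
have em : m.+2 = L by lia.
rewrite em /at_ modnn /w /= nth_cat size_map.
have -> : m < size C = false by lia.
have -> : m - size C = 0 by lia.
by [].
Qed.

Definition blk (H : nat -> seq nat) (i : nat) : seq letter := bul i :: map box (H i).
Definition word0 (n : nat) (H : nat -> seq nat) : seq letter := flatten (map (blk H) (iota 0 n)).
Definition rotm (i : nat) (X : seq letter) := rot (i %% size X) X.
Definition conc n r H := rotm r (word0 n H).
Definition valid L n (H : nat -> seq nat) :=
  (forall i, i < n -> all (fun b => b < n) (H i)) /\ size (word0 n H) = L.

Lemma size_rotm i X : size (rotm i X) = size X.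
Proof. by rewrite /rotm size_rot. Qed.

Lemma rotm_rotm i j X : rotm i (rotm j X) = rotm (i + j) X.
Proof.
rewrite /rotm size_rot.
case: (posnP (size X)) => [s0|sp].
  by rewrite s0 !modn0; move: s0 => /size0nil ->.
rewrite rot_add_mod; try by apply: ltnW; rewrite ltn_pmod.
rewrite (modnD _ _ sp).
have hi := ltn_pmod i sp; have hj := ltn_pmod j sp.
set a := i %% size X; set b := j %% size X.
case: (ltnP (a + b) (size X)) => h.
  have -> : a + b <= size X by lia.
  by rewrite mul0n subn0.
rewrite mul1n.
case: (eqVneq (a + b) (size X)) => e.
  by rewrite e leqnn subnn rot0 rot_size.
by have -> : a + b <= size X = false by lia.
Qed.

Lemma rotm_mod i X : rotm (i %% size X) X = rotm i X.
Proof. by rewrite /rotm modn_mod. Qed.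

Lemma rotm_addL i X : rotm (i + size X) X = rotm i X.
Proof. by rewrite /rotm modnDr. Qed.

Lemma rotm_mulL i m X : rotm (i + m * size X) X = rotm i X.
Proof. by rewrite /rotm addnC modnMDl. Qed.

Lemma rot_rotm a X : a <= size X -> rot a X = rotm a X.
Proof.
rewrite /rotm leq_eqVlt => /orP[/eqP->|h]; last by rewrite modn_small.
by rewrite modnn rot0 rot_size.
Qed.

Lemma rotm0 X : rotm 0 X = X.
Proof. by rewrite /rotm mod0n rot0. Qed.

Lemma rotm1 X : 1 < size X -> rotm 1 X = rot 1 X.
Proof. by move=> h; rewrite /rotm modn_small. Qed.

Lemma all_rot (T : Type) (P : pred T) s w : all P (rot s w) = all P w.
Proof. by rewrite /rot all_cat andbC -all_cat cat_take_drop. Qed.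

Lemma count_rot (T : Type) (P : pred T) s w : count P (rot s w) = count P w.
Proof. by rewrite /rot count_cat addnC -count_cat cat_take_drop. Qed.

Lemma bullet_labels_cat u v : bullet_labels (u ++ v) = bullet_labels u ++ bullet_labels v.
Proof. by rewrite /bullet_labels filter_cat map_cat. Qed.

Lemma bullet_labels_rot s w :
  bullet_labels (rot s w) = rot (size (bullet_labels (take s w))) (bullet_labels w).
Proof.
have E : bullet_labels w = bullet_labels (take s w) ++ bullet_labels (drop s w).
  by rewrite -{1}(cat_take_drop s w) bullet_labels_cat.
by rewrite E rot_size_cat /rot bullet_labels_cat.
Qed.

Lemma Omega_rot L n w s : Omega L n w -> Omega L n (rot s w).
Proof.
case/and4P => sw aw cw /existsP[r /eqP br].
apply/and4P; split.
- by rewrite size_rot.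
- by rewrite all_rot.
- by apply/allP => k kin; rewrite count_rot; move/allP: cw => /(_ k kin).
apply/existsP.
have hc : size (bullet_labels (take s w)) <= n.
  have : size (bullet_labels w) = n by rewrite br size_rot size_iota.
  have E : bullet_labels w = bullet_labels (take s w) ++ bullet_labels (drop s w) by rewrite -{1}(cat_take_drop s w) bullet_labels_cat.
  rewrite E size_cat; lia.
have hr : r <= n by rewrite -ltnS ltn_ord.
pose c := size (bullet_labels (take s w)).
have hs : size (rot r (iota 0 n)) = n by rewrite size_rot size_iota.
have e := @rot_add_mod _ c r (iota 0 n).
rewrite size_iota in e.
have hr' : (if c + r <= n then c + r else c + r - n) < n.+1.
  by case: ifP => h; lia.
exists (Ordinal hr').
by rewrite bullet_labels_rot br -e.
Qed.

Lemma Omega_rotm L n w s : Omega L n w -> Omega L n (rotm s w).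
Proof. exact: Omega_rot. Qed.

Lemma all_flatten' (T : Type) (P : pred T) (ss : seq (seq T)) :
  all P (flatten ss) = all (all P) ss.
Proof. by elim: ss => //= s ss IH; rewrite all_cat IH. Qed.

Lemma bl_box (C : seq nat) : bullet_labels (map box C) = [::].
Proof. by elim: C. Qed.

Lemma bl_word H l : bullet_labels (flatten (map (blk H) l)) = l.
Proof.
elim: l => //= i l IH.
rewrite -cat_cons bullet_labels_cat IH; have := bl_box (H i); by rewrite /bullet_labels /= => ->.
Qed.

Lemma count_word H l k : count_mem (bul k) (flatten (map (blk H) l)) = count_mem k l.
Proof.
elim: l => //= i l IH.
rewrite count_cat IH /blk /= count_map.
have -> : count (preim box (pred1 (bul k))) (H i) = 0 by apply/eqP; rewrite -leqn0 leqNgt -has_count; apply/hasP => -[].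
by rewrite add0n /bul xpair_eqE.
Qed.

Lemma Omega_word0 L n H : valid L n H -> Omega L n (word0 n H).
Proof.
case=> hl hs.
apply/and4P; split.
- by rewrite hs.
- rewrite /word0 all_flatten' all_map; apply/allP => i; rewrite mem_iota add0n => /andP[_ iL] /=.
  by rewrite iL all_map; apply: hl.
- apply/allP => k; rewrite mem_iota add0n => /andP[_ kn].
  rewrite /word0 count_word count_uniq_mem ?iota_uniq //.
  by rewrite mem_iota add0n kn.
apply/existsP; exists ord0; by rewrite /word0 bl_word rot0.
Qed.

Lemma Omega_conc L n r H : valid L n H -> Omega L n (conc n r H).
Proof. by move=> v; apply/Omega_rotm/Omega_word0. Qed.

Lemma word_struct (X : seq letter) : exists pre ps,
  X = map box pre ++ flatten [seq bul p.1 :: map box p.2 | p <- ps] /\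
  map fst ps = bullet_labels X.
Proof.
elim: X => [|[b v] X [pre [ps [eX eb]]]]; first by exists [::], [::].
case: b.
  exists [::], ((v, pre) :: ps); split; first by rewrite /= eX.
  by rewrite /= eb.
exists (v :: pre), ps; split; first by rewrite /= eX.
by rewrite eb.
Qed.

Lemma decomp L n w : 0 < n -> Omega L n w ->
  exists r H, valid L n H /\ w = conc n r H.
Proof.
move=> n0 Om; have Om' := Om.
case/and4P: Om' => /eqP sw aw cw _.
have c0 : count_mem (bul 0) w = 1 by move/allP: cw => /(_ 0); rewrite mem_iota n0 => /(_ isT) /eqP.
have i0L : index (bul 0) w < size w by rewrite index_mem -has_pred1 has_count c0.
set i0 := index (bul 0) w in i0L.
set X := rot i0 w.
have hX : X = bul 0 :: (drop i0.+1 w ++ take i0 w).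
  by rewrite /X /rot (drop_nth (bul 0) i0L) nth_index // -has_pred1 has_count c0.
have OX : Omega L n X by apply: Omega_rot.
case/and4P: OX => /eqP sX aX cX /existsP[r' /eqP br].
have blX : bullet_labels X = iota 0 n.
  have hr : r' <= n by rewrite -ltnS ltn_ord.
  rewrite br.
  move: hr; rewrite leq_eqVlt => /orP[/eqP e|hr].
    by rewrite e; have := rot_size (iota 0 n); rewrite size_iota.
  have h0 : head 0 (bullet_labels X) = 0 by rewrite hX.
  move: h0; rewrite br /rot (drop_nth 0) ?size_iota // nth_iota //= add0n => e.
  have E0 : forall m, 0 < m -> 0 :: drop 1 (iota 0 m) = iota 0 m by move=> [|m] //= _; rewrite drop0.
  by rewrite e take0 cats0 E0.
have [pre [ps [eX eb]]] := word_struct X.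
have pre0 : pre = [::].
  by move: eX; rewrite hX; case: pre => //= b pre [].
rewrite pre0 /= in eX.
pose H i := nth [::] (map snd ps) i.
have sps : size ps = n by rewrite -(size_map fst) eb blX size_iota.
have eps : ps = [seq (i, H i) | i <- iota 0 n].
  apply: (@eq_from_nth _ (0, [::])); first by rewrite size_map size_iota.
  move=> i; rewrite sps => iL.
  rewrite (nth_map 0) ?size_iota // nth_iota // add0n /H (nth_map (0, [::])) ?sps //.
  have := congr1 (fun s => nth 0 s i) eb; rewrite blX nth_iota // (nth_map (0, [::])) ?sps // add0n.
  by case: (nth _ ps i) => a b /= ->.
have XW : X = word0 n H by rewrite eX eps /word0 -map_comp.
exists (size w - i0), H; split; last first.
  rewrite /conc -XW -rot_rotm; last by rewrite /X size_rot leq_subr.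
  by rewrite -{1}(rotK i0 w) /rotr -/X /X size_rot.
split; last by rewrite -XW sX.
move=> i iL.
move: aX; rewrite XW /word0 all_flatten' all_map => /allP /(_ i).
rewrite mem_iota add0n iL => /(_ isT) /=.
by rewrite all_map => /andP[_].
Qed.

Definition ST n (w w' : seq letter) : Prop :=
  exists k, k < n /\ exists j,
    [\/ T1 w k j = Some w', T3 w k j = Some w' | T4 n w k j = Some w'].

Lemma ST_size n w w' : ST n w w' -> size w' = size w.
Proof.
case=> k [_ [j []]]; rewrite /T1 /T3 /T4; case: ifP => // _ [<-];
  by rewrite ?/swap_at size_mkseq.
Qed.

Lemma rate_pos (R : realFieldType) (p q : nat -> R) n w w' :
  (forall k, k < n -> (0 < p k)%R) -> (forall k, k < n -> (0 < q k)%R) ->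
  0 < size w -> ST n w w' -> (0 < rate p q n w w')%R.
Proof.
move=> hp hq L0 [k [kn [j hj]]].
rewrite /rate (bigD1 (Ordinal kn)) //=.
have ge0 : forall (k : 'I_n) (j : 'I_(size w)),
    (0 <= p k *+ (T1 w k j == Some w') + p k *+ (T2 n w k j == Some w')
      + q k *+ (T3 w k j == Some w') + q k *+ (T4 n w k j == Some w'))%R.
  move=> k' j'; have := hp k' (ltn_ord k'); have := hq k' (ltn_ord k') => a b.
  by rewrite !addr_ge0 // mulrn_wge0 // ltW.
apply: (@lt_le_trans _ _ (\sum_(j0 < size w) (p k *+ (T1 w k j0 == Some w') + p k *+ (T2 n w k j0 == Some w')
      + q k *+ (T3 w k j0 == Some w') + q k *+ (T4 n w k j0 == Some w')))%R); last first.
  by rewrite lerDl sumr_ge0 // => i _; rewrite big_seq sumr_ge0 // => j' _; apply: ge0.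
have jL : j %% size w < size w by rewrite ltn_pmod.
rewrite (bigD1 (Ordinal jL)) //=.
apply: (@lt_le_trans _ _ (p k *+ (T1 w k (j %% size w) == Some w') + p k *+ (T2 n w k (j %% size w) == Some w')
      + q k *+ (T3 w k (j %% size w) == Some w') + q k *+ (T4 n w k (j %% size w) == Some w'))%R); last first.
  by rewrite lerDl sumr_ge0 // => i _; apply: (ge0 (Ordinal kn)).
have := hp k kn; have := hq k kn => hqk hpk.
rewrite T1_mod T3_mod T4_mod //.
have hT2 : (0 <= p k *+ (T2 n w k (j %% size w) == Some w'))%R by rewrite mulrn_wge0 // ltW.
have hT1 : (0 <= p k *+ (T1 w k j == Some w'))%R by rewrite mulrn_wge0 // ltW.
have hT3 : (0 <= q k *+ (T3 w k j == Some w'))%R by rewrite mulrn_wge0 // ltW.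
have hT4 : (0 <= q k *+ (T4 n w k j == Some w'))%R by rewrite mulrn_wge0 // ltW.
case: hj => ->; rewrite eqxx mulr1n.
- by apply: ltr_wpDr => //; apply: ltr_wpDr => //; apply: ltr_wpDr.
- by apply: ltr_wpDr => //; apply: ltr_pwDr => //; rewrite addr_ge0.
- by apply: ltr_pwDr => //; rewrite !addr_ge0.
Qed.

Lemma rotm1' (X : seq letter) : rotm 1 X = rot 1 X.
Proof.
rewrite /rotm; case: X => [//|x [|y X]] //=.
Qed.

Lemma Omega_size_pos L n w : 0 < n -> Omega L n w -> 0 < size w.
Proof.
move=> n0 /and4P[_ _ cw _]; move/allP: cw => /(_ 0); rewrite mem_iota n0 => /(_ isT).
by case: w.
Qed.

Lemma Omega_count L n w k : k < n -> Omega L n w -> count_mem (bul k) w = 1.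
Proof.
move=> kn /and4P[_ _ cw _]; move/allP: cw => /(_ k); rewrite mem_iota add0n kn.
by move=> /(_ isT) /eqP.
Qed.

Section Reach.
Variables (L n : nat) (e : rel (seq letter)).
Hypothesis he : forall a b, Omega L n a -> ST n a b -> e a b.
Hypothesis n0 : 0 < n.

Definition reach a b := exists s, [&& path e a s, all (Omega L n) s & last a s == b].

Lemma reach_refl a : reach a a.
Proof. by exists [::]; rewrite /= eqxx. Qed.

Lemma reach_trans a b c : reach a b -> reach b c -> reach a c.
Proof.
move=> [s1 /and3P[p1 a1 /eqP l1]] [s2 /and3P[p2 a2 /eqP l2]].
exists (s1 ++ s2); rewrite cat_path all_cat last_cat l1 p1 p2 a1 a2 l2 eqxx //.
Qed.

Lemma reach_step a b : Omega L n a -> ST n a b -> Omega L n b -> reach a b.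
Proof. by move=> Oa s Ob; exists [:: b]; rewrite /= he // Ob eqxx. Qed.

Lemma ST_rot w w' : Omega L n w -> ST n w w' -> ST n (rot 1 w) (rot 1 w').
Proof.
move=> Ow [k [kn [j hj]]]; exists k; split => //.
have L0 := Omega_size_pos n0 Ow.
exists (j + size w).-1.
have e1 : ((j + size w).-1).+1 = j + size w by lia.
case: hj => h; [apply: Or31|apply: Or32|apply: Or33].
- by rewrite T1_rot // e1 -T1_mod modnDr T1_mod h.
- by rewrite T3_rot // e1 -T3_mod modnDr T3_mod h.
- rewrite T4_rot //; last by apply: (Omega_count _ Ow); rewrite ltn_pmod.
  by rewrite e1 -T4_mod // modnDr T4_mod // h.
Qed.

Lemma ST_rotm s w w' : Omega L n w -> ST n w w' -> ST n (rotm s w) (rotm s w').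
Proof.
move=> Ow h; elim: s => [|s IH]; first by rewrite !rotm0.
rewrite -add1n -!rotm_rotm !rotm1'.
by apply: ST_rot => //; apply: Omega_rotm.
Qed.

Definition MV d H H' := forall r, reach (conc n r H) (conc n (r + d) H').

Lemma MV_mod d d' H H' : valid L n H' -> d %% L = d' %% L -> MV d H H' -> MV d' H H'.
Proof.
move=> [_ sH] ed h r; have := h r.
suff -> : conc n (r + d) H' = conc n (r + d') H' by [].
by rewrite /conc /rotm sH -modnDmr ed modnDmr.
Qed.

Lemma MV_trans d1 d2 H1 H2 H3 : MV d1 H1 H2 -> MV d2 H2 H3 -> MV (d1 + d2) H1 H3.
Proof. by move=> h1 h2 r; apply: reach_trans (h1 r) _; rewrite addnA; apply: h2. Qed.

Lemma MV_refl H : MV 0 H H.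
Proof. by move=> r; rewrite addn0; apply: reach_refl. Qed.

Lemma MV_iter d H m : MV d H H -> MV (m * d) H H.
Proof.
move=> h; elim: m => [|m IH]; first exact: MV_refl.
by rewrite mulSn; apply: MV_trans.
Qed.

Lemma frame a a' H H' : valid L n H -> valid L n H' ->
  ST n (rotm a (word0 n H)) (rotm a' (word0 n H')) -> MV (a' + L - a %% L) H H'.
Proof.
move=> vH vH' hs r.
have [_ sX] := vH; have [_ sX'] := vH'.
have L0 : 0 < L by rewrite -sX; apply: (Omega_size_pos n0); apply: Omega_word0 vH.
have hs2 := ST_rotm (r + L - a %% L) (Omega_rotm a (Omega_word0 vH)) hs.
rewrite !rotm_rotm in hs2.
have am : a %% L < L by rewrite ltn_pmod.
have e1 : rotm (r + L - a %% L + a) (word0 n H) = conc n r H.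
  rewrite /conc -(rotm_addL r) sX.
  have := divn_eq a L; move: (a %/ L) (a %% L) am => q m' am ea.
  rewrite -(rotm_mulL (r + L) q) sX; congr rotm; lia.
have e2 : r + L - a %% L + a' = r + (a' + L - a %% L) by lia.
rewrite e1 e2 in hs2.
apply: reach_step => //; [exact: Omega_conc | exact: Omega_conc].
Qed.

End Reach.

Definition upd (H : nat -> seq nat) i v := fun j => if j == i then v else H j.
Definition pos (f : nat) (H : nat -> seq nat) := sumn (map (fun i => (size (H i)).+1) (iota 0 f)).

Lemma nth_rot (T : Type) (x0 : T) (s : seq T) k i : k <= size s -> i < size s ->
  nth x0 (rot k s) i = nth x0 s ((k + i) %% size s).
Proof.
move=> ks iS; rewrite /rot nth_cat size_drop.
case: ltnP => h.
  by rewrite nth_drop modn_small //; lia.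
rewrite nth_take; last by lia.
have -> : (k + i) %% size s = k + i - size s.
  have -> : k + i = (k + i - size s) + size s by lia.
  by rewrite modnDr modn_small; lia.
by congr nth; lia.
Qed.

Lemma rot_flatten (T : Type) f (bs : seq (seq T)) :
  flatten (rot f bs) = rot (size (flatten (take f bs))) (flatten bs).
Proof.
have E : flatten bs = flatten (take f bs) ++ flatten (drop f bs) by rewrite -flatten_cat cat_take_drop.
by rewrite [in RHS]E rot_size_cat /rot flatten_cat.
Qed.

Lemma size_word_l H l : size (flatten (map (blk H) l)) = sumn (map (fun i => (size (H i)).+1) l).
Proof. by elim: l => //= i l IH; rewrite size_cat IH /= size_map. Qed.

Lemma Wk_eq n f H : f <= n ->
  flatten (map (blk H) (rot f (iota 0 n))) = rotm (pos f H) (word0 n H).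
Proof.
move=> fn; rewrite map_rot rot_flatten -map_take take_iota (minn_idPl fn).
rewrite rot_rotm; first by rewrite size_word_l.
have -> : iota 0 n = iota 0 f ++ iota (0 + f) (n - f) by rewrite -iotaD subnKC.
by rewrite map_cat flatten_cat size_cat leq_addr.
Qed.

Lemma predl_lt n k : 0 < n -> predl n k < n.
Proof. by move=> n0; rewrite ltn_pmod. Qed.

Lemma predlS n k : 0 < n -> k < n -> (predl n k).+1 %% n = k.
Proof.
move=> n0 kn; rewrite /predl modS_mod.
have -> : (k + n.-1).+1 = k + n by lia.
by rewrite modnDr modn_small.
Qed.

Lemma succl_ne n k : 1 < n -> k < n -> succl n k != k.
Proof.
move=> n1 kn; rewrite /succl.
case: (ltnP k.+1 n) => h; first by rewrite modn_small //; lia.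
have -> : k.+1 = n by lia.
by rewrite modnn; lia.
Qed.

Lemma predl_ne n k : 1 < n -> k < n -> predl n k != k.
Proof.
move=> n1 kn; apply/eqP => e.
have := predlS (ltnW n1) kn; rewrite e => h.
by move: (succl_ne n1 kn); rewrite /succl h eqxx.
Qed.

Lemma rot_pred_iota n k : 1 < n -> k < n ->
  rot (predl n k) (iota 0 n) = predl n k :: k :: drop 2 (rot (predl n k) (iota 0 n)).
Proof.
move=> n1 kn; set s := rot _ _.
have ss : size s = n by rewrite size_rot size_iota.
have kpn : predl n k <= size (iota 0 n) by rewrite size_iota ltnW // predl_lt //; lia.
have nth_s : forall i, i < n -> nth 0 s i = (predl n k + i) %% n.
  move=> i iL; rewrite /s nth_rot // ?size_iota // nth_iota //; last by rewrite ltn_pmod; lia.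
rewrite -{1}(drop0 s) (drop_nth 0) ?ss; last by lia.
rewrite (drop_nth 0) ?ss; last by lia.
rewrite !nth_s; try lia.
by rewrite addn0 modn_small ?predl_lt; try lia; rewrite addn1 predlS //; lia.
Qed.

Lemma rest3 n k : 2 < n -> k < n ->
  drop 2 (rot (predl n k) (iota 0 n)) = succl n k :: drop 3 (rot (predl n k) (iota 0 n)).
Proof.
move=> n2 kn; set s := rot _ _.
have ss : size s = n by rewrite size_rot size_iota.
have kpn : predl n k <= size (iota 0 n) by rewrite size_iota ltnW // predl_lt //; lia.
rewrite (drop_nth 0) ?ss //; congr cons.
rewrite /s nth_rot // ?size_iota // nth_iota; last by rewrite ltn_pmod; lia.
have h := predlS (ltnW (ltnW n2)) kn.
rewrite add0n /succl; transitivity (((predl n k).+1 %% n).+1 %% n); first by rewrite modS_mod addn2.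
by rewrite h.
Qed.

Lemma rest2 n k : n = 2 -> drop 2 (rot (predl n k) (iota 0 n)) = [::].
Proof. by move=> ->; apply: size0nil; rewrite size_drop size_rot size_iota. Qed.

Lemma pos_eq f H H' : (forall i, i < f -> H' i = H i) -> pos f H' = pos f H.
Proof.
move=> h; rewrite /pos; congr sumn; apply/eq_in_map => i.
by rewrite mem_iota add0n => /andP[_ /h ->].
Qed.

Lemma pos_S0 f H H' x : 0 < f -> H' 0 = rcons (H 0) x ->
  (forall i, 0 < i < f -> H' i = H i) -> pos f H' = (pos f H).+1.
Proof.
move=> f0 h0 h; rewrite /pos.
case: f f0 h => [//|f] _ h.
rewrite -add1n iotaD /= h0 size_rcons.
have -> : [seq (size (H' i)).+1 | i <- iota 1 f] = [seq (size (H i)).+1 | i <- iota 1 f].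
  apply/eq_in_map => i; rewrite mem_iota => /andP[a b]; rewrite h //; lia.
by [].
Qed.

Section Moves.
Variables (L n : nat) (e : rel (seq letter)).
Hypothesis he : forall a b, Omega L n a -> ST n a b -> e a b.
Hypothesis n1 : 1 < n.
Let n0 : 0 < n. Proof. by apply: ltnW. Qed.

Notation MV := (MV L n e).

Lemma M3 H k t b : valid L n H -> k < n -> b < n -> b != k -> H (predl n k) = rcons t b ->
  let H' := upd (upd H (predl n k) t) k (b :: H k) in
  valid L n H' /\ (exists d, MV d H H') /\ (exists d, MV d H' H).
Proof.
move=> vH kn bn bk hkp H'.
set kp := predl n k in hkp H' *.
set Rest := drop 2 (rot kp (iota 0 n)).
have E : rot kp (iota 0 n) = kp :: k :: Rest by apply: rot_pred_iota.
have U : uniq (kp :: k :: Rest) by rewrite -E rot_uniq iota_uniq.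
case/and3P: U => /norP[kpk kpR] kR _.
have eR : map (blk H') Rest = map (blk H) Rest.
  apply/eq_in_map => i iR; rewrite /blk /H' /upd.
  have -> : (i == k) = false by apply/negbTE; apply: contraNneq kR => <-.
  by have -> : (i == kp) = false by apply/negbTE; apply: contraNneq kpR => <-.
set F := flatten (map (blk H) Rest).
have hk' : H' k = b :: H k by rewrite /H' /upd eqxx.
have hkp' : H' kp = t by rewrite /H' /upd (negbTE kpk) eqxx.
have kpn : kp <= n by rewrite ltnW // predl_lt.
have W : rotm (pos kp H) (word0 n H) = (bul kp :: map box t) ++ box b :: bul k :: (map box (H k) ++ F).
  rewrite -Wk_eq // E /= /blk hkp map_rcons.
  by rewrite cat_rcons.
have W' : rotm (pos kp H') (word0 n H') = (bul kp :: map box t) ++ bul k :: box b :: (map box (H k) ++ F).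
  by rewrite -Wk_eq // E /= eR /blk hkp' hk' /F.
have vH' : valid L n H'.
  case: vH => hl hs; split.
    move=> i iL; rewrite /H' /upd; case: eqP => [_|_]; first by rewrite /= bn hl.
    case: eqP => [_|_]; last by apply: hl.
    by have := hl kp (predl_lt _ n0); rewrite hkp all_rcons => /andP[].
  rewrite -hs -(size_rotm (pos kp H')) -(size_rotm (pos kp H) (word0 n H)) W W'.
  by rewrite !size_cat.
split => //; split.
  exists (pos kp H' + L - pos kp H %% L); apply: frame => //.
  rewrite W W'; exists k; split => //; exists (size (bul kp :: map box t)).
  by apply: Or32; apply: T3_block.
exists (pos kp H + L - pos kp H' %% L); apply: frame => //.
rewrite W W'; exists k; split => //; exists (size (bul kp :: map box t)).
by apply: Or31; apply: T1_block.
Qed.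

Lemma M4 H k t : valid L n H -> k < n -> H (predl n k) = rcons t k ->
  let H' := upd (upd H (predl n k) t) k (rcons (H k) (succl n k)) in
  valid L n H' /\ MV (L + (k == 0)) H H'.
Proof.
move=> vH kn hkp H'.
set kp := predl n k in hkp H' *.
set ks := succl n k in H' *.
set Rest := drop 2 (rot kp (iota 0 n)).
have E : rot kp (iota 0 n) = kp :: k :: Rest by apply: rot_pred_iota.
have U : uniq (kp :: k :: Rest) by rewrite -E rot_uniq iota_uniq.
case/and3P: U => /norP[kpk kpR] kR _.
have eR : map (blk H') Rest = map (blk H) Rest.
  apply/eq_in_map => i iR; rewrite /blk /H' /upd.
  have -> : (i == k) = false by apply/negbTE; apply: contraNneq kR => <-.
  by have -> : (i == kp) = false by apply/negbTE; apply: contraNneq kpR => <-.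
set F := flatten (map (blk H) Rest).
set u := bul kp :: map box t.
have hk' : H' k = rcons (H k) ks by rewrite /H' /upd eqxx.
have hkp' : H' kp = t by rewrite /H' /upd (negbTE kpk) eqxx.
have kpn : kp <= n by rewrite ltnW // predl_lt.
have ksk : ks != k by apply: succl_ne.
have [V eV] : exists V, F ++ u = bul ks :: V.
  case: (ltnP 2 n) => h.
    exists (map box (H ks) ++ flatten (map (blk H) (drop 3 (rot kp (iota 0 n)))) ++ u).
    by rewrite /F /Rest rest3 //= catA.
  have n2 : n = 2 by lia.
  exists (map box t); rewrite /F /Rest rest2 //= /u; congr cons.
  by rewrite /ks /kp /succl /predl n2 addn1.
have W : rotm (size u + pos kp H) (word0 n H) = box k :: bul k :: map box (H k) ++ bul ks :: V.
  rewrite -rotm_rotm -Wk_eq // E /= /blk hkp map_rcons.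
  have -> : bul kp :: rcons (map box t) (box k) ++ (bul k :: map box (H k) ++ flatten (map (blk H) Rest))
     = u ++ (box k :: bul k :: (map box (H k) ++ F)) by rewrite /u cat_rcons.
  change (size (map box t)).+1 with (size u).
  rewrite -rot_rotm ?rot_size_cat; last by rewrite size_cat leq_addr.
  by rewrite /= -catA eV.
have W' : rotm (size u + pos kp H') (word0 n H') = bul k :: map box (H k) ++ box ks :: bul ks :: V.
  rewrite -rotm_rotm -Wk_eq // E /= eR /blk hkp' hk'.
  have -> : bul kp :: map box t ++ (bul k :: map box (rcons (H k) ks) ++ flatten (map (blk H) Rest))
     = u ++ (bul k :: map box (rcons (H k) ks) ++ F) by [].
  try change (size (map box t)).+1 with (size u).
  rewrite -rot_rotm ?rot_size_cat; last by rewrite size_cat leq_addr.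
  by rewrite map_rcons cat_rcons /= -catA /= eV.
have vH' : valid L n H'.
  case: vH => hl hs; split.
    move=> i iL; rewrite /H' /upd; case: eqP => [_|_].
      by rewrite all_rcons hl // andbT /ks /succl ltn_pmod.
    case: eqP => [_|_]; last by apply: hl.
    by have := hl kp (predl_lt _ n0); rewrite hkp all_rcons => /andP[].
  rewrite -hs -(size_rotm (size u + pos kp H')) -(size_rotm (size u + pos kp H) (word0 n H)) W W'.
  by rewrite /= !size_cat /= !addnS.
split => //.
have hst : ST n (rotm (size u + pos kp H) (word0 n H)) (rotm (size u + pos kp H') (word0 n H')).
  rewrite W W'; exists k; split => //; exists 0; apply: Or33.
  by rewrite T4_block.
have hm := frame he n0 vH vH' hst.
apply: MV_mod hm => //.
have pe : pos kp H' = pos kp H + (k == 0).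
  case: eqP => [k0|k0].
    rewrite addn1; apply: (pos_S0 (x := ks)).
    - by rewrite /kp k0 /predl add0n modn_small; lia.
    - by rewrite -k0 hk'.
    move=> i /andP[i0 ikp]; rewrite /H' /upd.
    have -> : (i == k) = false by rewrite k0; lia.
    by have -> : (i == kp) = false by lia.
  rewrite addn0; apply: pos_eq => i ikp; rewrite /H' /upd.
  have kpe : kp = k.-1.
    rewrite /kp /predl.
    have -> : k + n.-1 = k.-1 + n by lia.
    by rewrite modnDr modn_small; lia.
  have -> : (i == k) = false by lia.
  by have -> : (i == kp) = false by lia.
rewrite pe.
have L0 : 0 < L by have := Omega_size_pos n0 (Omega_word0 vH); case: vH => _ ->.
set a := size u + pos kp H.
have := divn_eq a L; have := ltn_pmod a L0.
move: (a %/ L) (a %% L) => q m am ea.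
have -> : size u + (pos kp H + (k == 0)) + L - m = q * L + ((k == 0) + L) by rewrite addnA -/a; lia.
by rewrite modnMDl addnC.
Qed.

End Moves.

Lemma predl_pos n k : 0 < k -> k < n -> predl n k = k.-1.
Proof.
move=> k0 kn; rewrite /predl.
have -> : k + n.-1 = k.-1 + n by lia.
by rewrite modnDr modn_small; lia.
Qed.

Lemma predl0 n : 0 < n -> predl n 0 = n.-1.
Proof. by move=> n0; rewrite /predl add0n modn_small; lia. Qed.

Lemma predl_succ n m : 0 < n -> predl n (m.+1 %% n) = m %% n.
Proof.
move=> n0; rewrite /predl modnDml.
have -> : m.+1 + n.-1 = m + n by lia.
by rewrite modnDr.
Qed.

Lemma upd3 (B : nat -> seq nat) p v j X : upd (upd (upd B p v) p (B p)) j X = upd B j X.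
Proof.
apply: functional_extensionality => i; rewrite /upd.
by case: eqP => // _; case: eqP => // ->.
Qed.

Lemma rcons_nseq' (T : Type) a (x : T) : rcons (nseq a x) x = nseq a.+1 x.
Proof. by elim: a => //= a ->. Qed.

Section Algo.
Variables (L n : nat) (e : rel (seq letter)).
Hypothesis he : forall a b, Omega L n a -> ST n a b -> e a b.
Hypothesis n1 : 1 < n.
Let n0 : 0 < n. Proof. by apply: ltnW. Qed.

Notation MV := (MV L n e).

Definition Conn H H' := [/\ valid L n H, valid L n H', (exists d, MV d H H') & (exists d, MV d H' H)].

Lemma Conn_refl H : valid L n H -> Conn H H.
Proof. by move=> v; split => //; exists 0; apply: MV_refl. Qed.

Lemma Conn_trans H1 H2 H3 : Conn H1 H2 -> Conn H2 H3 -> Conn H1 H3.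
Proof.
move=> [v1 v2 [d1 m1] [d1' m1']] [_ v3 [d2 m2] [d2' m2']]; split => //.
  by exists (d1 + d2); apply: MV_trans m1 m2.
by exists (d2' + d1'); apply: MV_trans m2' m1'.
Qed.

Lemma word0_ext H H' : (forall i, i < n -> H i = H' i) -> word0 n H = word0 n H'.
Proof.
move=> h; rewrite /word0; congr flatten; apply/eq_in_map => i.
by rewrite mem_iota add0n /blk => /andP[_ /h ->].
Qed.

Lemma Conn_ext H1 H2 H3 : Conn H1 H2 -> (forall i, i < n -> H2 i = H3 i) -> Conn H1 H3.
Proof.
move=> [v1 [l2 s2] [d m] [d' m']] h.
have ew := word0_ext h.
have v3 : valid L n H3 by split; [move=> i iL; rewrite -h // l2 | rewrite -ew].
split => //.
  by exists d => r; rewrite /conc -ew; apply: m.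
by exists d' => r; rewrite /conc -ew; apply: m'.
Qed.

Section Cascade.
Variables (H : nat -> seq nat) (k : nat) (t : seq nat).
Hypothesis vH : valid L n H.
Hypothesis kn : k < n.
Hypothesis hkp : H (predl n k) = rcons t k.

Let kp := predl n k.
Let G := upd H kp t.
Definition S i := upd G ((kp + i) %% n) (rcons (G ((kp + i) %% n)) ((kp + i).+1 %% n)).
Definition dd i := L + ((kp + i).+1 %% n == 0).

Lemma S0 : S 0 = H.
Proof.
apply: functional_extensionality => j.
rewrite /S addn0 modn_small ?predl_lt // predlS // /G /upd.
by case: eqP => // ->; rewrite eqxx hkp.
Qed.

Lemma Sn : S n = S 0.
Proof.
have e1 : (kp + n) %% n = kp %% n by rewrite modnDr.
have e2 : (kp + n).+1 %% n = kp.+1 %% n by rewrite -addSn modnDr.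
by rewrite /S addn0 e1 e2.
Qed.

Lemma S_step i : valid L n (S i) -> valid L n (S i.+1) /\ MV (dd i) (S i) (S i.+1).
Proof.
move=> vS.
set c := (kp + i).+1 %% n; set ei := (kp + i) %% n.
have pc : predl n c = ei by rewrite /c predl_succ.
have cn : c < n by rewrite ltn_pmod.
have hS : S i (predl n c) = rcons (G ei) c by rewrite pc /S /upd eqxx.
have [v' m'] := M4 he n1 vS cn hS.
have ce : c != ei by rewrite -pc eq_sym predl_ne.
suff E : upd (upd (S i) (predl n c) (G ei)) c (rcons (S i c) (succl n c)) = S i.+1.
  by rewrite E in v' m'.
rewrite pc; apply: functional_extensionality => j.
rewrite /S /upd addnS -/c.
have -> : ((kp + i).+2 %% n) = succl n c by rewrite /succl /c modS_mod.
rewrite -/ei (negbTE ce).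
by case: (j == c) => //; case: eqP => [->|].
Qed.

Lemma chain a b : a <= b <= n -> valid L n (S a) ->
  valid L n (S b) /\ MV (\sum_(a <= i < b) dd i) (S a) (S b).
Proof.
elim: b => [|b IH] /andP[ab bn] va.
  have a0 : a = 0 by lia.
  subst a; by rewrite big_geq //; split => //; apply: MV_refl.
case: (eqVneq a b.+1) => [<-|ne].
  by rewrite big_geq //; split => //; apply: MV_refl.
have [vb mb] := IH (ltac:(lia)) va.
have [vb' mb'] := S_step vb.
split => //; rewrite big_nat_recr /=; last by lia.
by apply: MV_trans mb mb'.
Qed.

End Cascade.

Lemma M4_conn H k t : valid L n H -> k < n -> H (predl n k) = rcons t k ->
  Conn H (upd (upd H (predl n k) t) k (rcons (H k) (succl n k))).
Proof.
move=> vH kn hkp.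
have [v' m'] := M4 he n1 vH kn hkp.
split => //; first by exists (L + (k == 0)).
have E : S H k t 1 = upd (upd H (predl n k) t) k (rcons (H k) (succl n k)).
  apply: functional_extensionality => j.
  rewrite /S addn1 predlS // /upd.
  have -> : (predl n k).+2 %% n = succl n k by rewrite -modS_mod predlS.
  have hh : (k == predl n k) = false by rewrite eq_sym; apply: negbTE; apply: predl_ne.
  by rewrite hh.
have [vn mn] := @chain H k t kn 1 n (ltac:(lia)) (ltac:(by rewrite E)).
rewrite Sn (S0 kn hkp) E in mn.
by exists (\sum_(1 <= i < n) dd k i).
Qed.

Lemma M3_conn H k t b : valid L n H -> k < n -> b < n -> b != k -> H (predl n k) = rcons t b ->
  Conn H (upd (upd H (predl n k) t) k (b :: H k)).
Proof.
move=> vH kn bn bk hkp.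
have [v' [m1 m2]] := M3 he n1 vH kn bn bk hkp.
by split.
Qed.

Lemma empty_seg k s H : k < n -> valid L n H -> H (predl n k) = s ->
  exists H', [/\ Conn H H', H' (predl n k) = [::] &
                 forall i, i != predl n k -> i != k -> H' i = H i].
Proof.
move=> kn; elim/last_ind: s H => [|t b IH] H vH hs.
  by exists H; split => //; apply: Conn_refl.
have bn : b < n.
  by case: vH => hl _; have := hl _ (predl_lt k n0); rewrite hs all_rcons => /andP[].
have kpk := predl_ne n1 kn.
case: (eqVneq b k) => [bk|bk].
  rewrite bk in hs.
  have c1 := M4_conn vH kn hs.
  case: (c1) => _ v1 _ _.
  have [H2 [c2 e2 r2]] := IH _ v1 (ltac:(by rewrite /upd (negbTE kpk) eqxx)).
  exists H2; split => //; first by apply: Conn_trans c1 c2.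
  move=> i i1 i2; rewrite r2 // /upd (negbTE i1) (negbTE i2) //.
have c1 := M3_conn vH kn bn bk hs.
case: (c1) => _ v1 _ _.
have [H2 [c2 e2 r2]] := IH _ v1 (ltac:(by rewrite /upd (negbTE kpk) eqxx)).
exists H2; split => //; first by apply: Conn_trans c1 c2.
move=> i i1 i2; rewrite r2 // /upd (negbTE i1) (negbTE i2) //.
Qed.

Lemma phase1 m H : m <= n.-1 -> valid L n H ->
  exists H', Conn H H' /\ forall i, i < m -> H' i = [::].
Proof.
elim: m => [|m IH] mn vH; first by exists H; split => //; apply: Conn_refl.
have [H1 [c1 e1]] := IH (ltac:(lia)) vH.
case: (c1) => _ v1 _ _.
have hm : predl n m.+1 = m by rewrite predl_pos //; lia.
have [H2 [c2 e2 r2]] := @empty_seg m.+1 _ H1 (ltac:(lia)) v1 erefl.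
exists H2; split; first by apply: Conn_trans c1 c2.
move=> i im; case: (eqVneq i m) => [->|ne]; first by rewrite -hm.
rewrite r2 ?e1 //; try lia.
Qed.

Definition B a s := fun i => if i == n.-1 then s else if i == n.-2 then nseq a n.-1 else [::].

Lemma travel a s' d : forall j lam, j + d = n.-2 -> j <= lam < n ->
  let St := upd (B a s') (predl n j) (rcons (B a s' (predl n j)) lam) in
  valid L n St -> Conn St (B a.+1 s').
Proof.
elim: d => [|d IH] j lam jd /andP[jl ln] St vS.
- rewrite addn0 in jd.
  have jkn : j < n by lia.
  have hS : St (predl n j) = rcons (B a s' (predl n j)) lam by rewrite /St /upd eqxx.
  have Sj : St j = nseq a n.-1.
    rewrite /St /upd eq_sym (negbTE (predl_ne n1 jkn)) /B.
    have -> : (j == n.-1) = false by lia.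
    by rewrite jd eqxx.
  have target : upd (B a s') j (nseq a.+1 n.-1) = B a.+1 s'.
    apply: functional_extensionality => i; rewrite /upd /B.
    case: (eqVneq i j) => [->|ne].
      have -> : (j == n.-1) = false by lia.
      by rewrite jd eqxx.
    by case: eqP => // _; rewrite -jd (negbTE ne).
  case: (eqVneq lam j) => [lj|lj].
    rewrite lj in hS.
    have c := M4_conn vS jkn hS.
    rewrite Sj /St upd3 in c.
    have sj : succl n j = n.-1 by rewrite /succl modn_small; lia.
    by rewrite sj rcons_nseq' target in c.
  have c := M3_conn vS jkn ln lj hS.
  rewrite Sj /St upd3 in c.
  have hl : lam = n.-1 by move: lj; lia.
  have E : upd (B a s') j (lam :: nseq a n.-1) = B a.+1 s' by rewrite hl -target.
  by rewrite E in c.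
- have jkn : j < n by lia.
  have hS : St (predl n j) = rcons (B a s' (predl n j)) lam by rewrite /St /upd eqxx.
  have Bj : B a s' j = [::].
    rewrite /B.
    have -> : (j == n.-1) = false by lia.
    by have -> : (j == n.-2) = false by lia.
  have Sj : St j = [::].
    by rewrite /St /upd eq_sym (negbTE (predl_ne n1 jkn)) Bj.
  have pj : predl n j.+1 = j by rewrite predl_pos //; lia.
  case: (eqVneq lam j) => [lj|lj].
    rewrite lj in hS.
    have c := M4_conn vS jkn hS.
    rewrite Sj /St upd3 /= in c.
    have sj : succl n j = j.+1 by rewrite /succl modn_small; lia.
    rewrite sj in c.
    have E : upd (B a s') j [:: j.+1] = upd (B a s') (predl n j.+1) (rcons (B a s' (predl n j.+1)) j.+1).
      by rewrite pj Bj.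
    rewrite E in c; case: (c) => _ v2 _ _.
    apply: Conn_trans c (IH j.+1 j.+1 (ltac:(lia)) (ltac:(lia)) v2).
  have c := M3_conn vS jkn ln lj hS.
  rewrite Sj /St upd3 in c.
  have E : upd (B a s') j [:: lam] = upd (B a s') (predl n j.+1) (rcons (B a s' (predl n j.+1)) lam).
    by rewrite pj Bj.
  rewrite E in c; case: (c) => _ v2 _ _.
  apply: Conn_trans c (IH j.+1 lam (ltac:(lia)) (ltac:(lia)) v2).
Qed.

Lemma phase2 s a : valid L n (B a s) -> Conn (B a s) (B (a + size s) [::]).
Proof.
elim/last_ind: s a => [|s' l IH] a vB; first by rewrite addn0; apply: Conn_refl.
have ln : l < n.
  case: vB => hl _; have := hl n.-1 (ltac:(lia)); rewrite /B eqxx all_rcons.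
  by case/andP.
have E : B a (rcons s' l) = upd (B a s') (predl n 0) (rcons (B a s' (predl n 0)) l).
  rewrite predl0 //; apply: functional_extensionality => i; rewrite /upd /B.
  by case: eqP => [_|_] //; rewrite eqxx.
have vS : valid L n (upd (B a s') (predl n 0) (rcons (B a s' (predl n 0)) l)) by rewrite -E.
have c1 := travel (d := n.-2) (j := 0) (lam := l) (ltac:(lia)) (ltac:(lia)) vS.
rewrite -E in c1; case: (c1) => _ v2 _ _.
have c2 := IH a.+1 v2.
by rewrite size_rcons addnS -addSn; apply: Conn_trans c1 c2.
Qed.

Definition Hc N := fun i => if i == n.-2 then nseq N n.-1 else [::].

Lemma to_canon H : valid L n H -> exists N, Conn H (Hc N).
Proof.
move=> vH.
have [H1 [c1 e1]] := phase1 (m := n.-1) (ltac:(lia)) vH.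
case: (c1) => _ v1 _ _.
have c2 : Conn H (B 0 (H1 n.-1)).
  apply: (@Conn_ext H H1 (B 0 (H1 n.-1)) c1) => i iL; rewrite /B.
  case: eqP => [->//|ne]; case: eqP => [->|_]; first by rewrite e1 //; lia.
  by rewrite e1 //; lia.
case: (c2) => _ v2 _ _.
have c3 := phase2 v2.
exists (size (H1 n.-1)); apply: (@Conn_ext _ _ (Hc (size (H1 n.-1))) (Conn_trans c2 c3)) => i iL.
rewrite /B /Hc add0n; case: eqP => [->|_] //.
have -> : (n.-1 == n.-2) = false by lia.
by [].
Qed.

End Algo.

Lemma sumnS (f : nat -> nat) l : sumn (map (fun i => (f i).+1) l) = size l + sumn (map f l).
Proof. by elim: l => //= i l ->; lia. Qed.

Lemma sumn_ind (c N : nat) (l : seq nat) : sumn (map (fun i => if i == c then N else 0) l) = N * count_mem c l.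
Proof. by elim: l => //= [|i l ->]; [rewrite muln0 | rewrite mulnDr; case: (i == c); rewrite ?muln1 ?muln0]. Qed.

Lemma size_Hc n N : 0 < n -> size (word0 n (Hc n N)) = n + N.
Proof.
move=> n0; rewrite /word0 size_word_l sumnS size_iota.
have -> : map (fun i => size (Hc n N i)) (iota 0 n) = map (fun i => if i == n.-2 then N else 0) (iota 0 n).
  by apply/eq_map => i; rewrite /Hc; case: eqP => _; rewrite ?size_nseq.
rewrite sumn_ind count_uniq_mem ?iota_uniq // mem_iota add0n.
have -> : n.-2 < n by lia.
by rewrite muln1.
Qed.

Lemma all_lt1 (s : seq nat) : all (fun b => b < 1) s -> s = nseq (size s) 0.
Proof. by elim: s => //= b s IH /andP[b0 /IH {1}->]; case: b b0. Qed.

Section Final.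
Variables (L n : nat) (e : rel (seq letter)).
Hypothesis he : forall a b, Omega L n a -> ST n a b -> e a b.
Hypothesis n0 : 0 < n.
Hypothesis nL : n < L.

Notation MV := (MV L n e).

Lemma sum_b : 1 < n -> \sum_(0 <= i < n) ((n.-2 + i).+1 %% n == 0) = 1.
Proof.
move=> n1.
rewrite (@big_ltn _ _ _ 0 n) // (@big_ltn _ _ _ 1 n) //.
rewrite big_nat_cond big1; last first.
  move=> i /andP[/andP[h1 h2] _].
  have -> : (n.-2 + i).+1 = i.-1 + n by lia.
  by rewrite modnDr modn_small; lia.
have -> : (n.-2 + 0).+1 %% n = n.-1 by rewrite modn_small; lia.
have -> : (n.-2 + 1).+1 = n by lia.
by rewrite modnn; have -> : (n.-1 == 0) = false by lia.
Qed.

Lemma canon_rot N : valid L n (Hc n N) -> forall m, MV m (Hc n N) (Hc n N).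
Proof.
move=> vH.
have L1 : 1 < L by lia.
have sz : size (word0 n (Hc n N)) = L by case: vH.
have NL : N = L - n by move: sz; rewrite size_Hc //; lia.
have N0 : 0 < N by lia.
suff [d [hd md]] : exists d, d %% L = 1 %% L /\ MV d (Hc n N) (Hc n N).
  move=> m; apply: MV_mod (MV_iter m md) => //.
  by rewrite -modnMmr hd modnMmr muln1.
case: (ltnP 1 n) => n1.
-
  set k := n.-1.
  have kn : k < n by lia.
  have pk : predl n k = n.-2 by rewrite predl_pos; lia.
  have hkp : Hc n N (predl n k) = rcons (nseq N.-1 n.-1) k.
    by rewrite pk /Hc eqxx rcons_nseq' prednK.
  have [_ mc] := @chain L n e he n1 (Hc n N) k (nseq N.-1 n.-1) kn 0 n (ltac:(lia)) (ltac:(by rewrite (S0 n1 kn hkp))).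
  rewrite Sn (S0 n1 kn hkp) in mc.
  exists (\sum_(0 <= i < n) dd L n k i); split => //.
  rewrite /dd big_split /= sum_nat_const_nat subn0 pk (sum_b n1).
  by rewrite modnMDl.
-
  have n1' : n = 1 by lia.
  subst n.
  set C := nseq N.-1 0.
  have W : word0 1 (Hc 1 N) = (bul 0 :: map box C) ++ [:: box 0].
    rewrite /word0 /= /blk /Hc /= cats0 /C -{1}(prednK N0) -rcons_nseq' map_rcons.
    by rewrite -cats1.
  exists (0 + L - size (bul 0 :: map box C) %% L); split.
    have sC : size (bul 0 :: map box C) = N by rewrite /= size_map size_nseq prednK.
    rewrite sC (modn_small (m:=N)); last by lia.
    by have -> : 0 + L - N = 1 by lia.
  apply: (@frame L 1 e he n0 (size (bul 0 :: map box C)) 0 _ _ vH vH).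
  rewrite W rotm0 -rot_rotm ?rot_size_cat; last by rewrite size_cat leq_addr.
  exists 0; split => //; exists 0; apply: Or33.
  exact: T4_block1.
Qed.

Lemma conc_eqmod r r' H : valid L n H -> r %% L = r' %% L -> conc n r H = conc n r' H.
Proof. by case=> _ sz e'; rewrite /conc /rotm sz e'. Qed.

Lemma reach_all x y : Omega L n x -> Omega L n y -> reach L n e x y.
Proof.
move=> Ox Oy.
have [r1 [H1 [v1 ->]]] := decomp n0 Ox.
have [r2 [H2 [v2 ->]]] := decomp n0 Oy.
have canon : forall H, valid L n H -> exists N, Conn L n e H (Hc n N).
  move=> H vH; case: (ltnP 1 n) => n1; first by apply: (to_canon he n1).
  have n1' : n = 1 by lia.
  exists (size (H 0)); apply: (@Conn_ext L n e H H (Hc n (size (H 0))) (Conn_refl e vH)).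
  move=> i; rewrite n1' ltnS leqn0 => /eqP ->.
  rewrite /Hc /=; apply: all_lt1.
  by case: vH => hl _; have := hl 0; rewrite n1' => /(_ isT).
have [N1 [_ vc1 [d1 m1] _]] := canon _ v1.
have [N2 [_ vc2 _ [d2 m2]]] := canon _ v2.
have eN : N2 = N1.
  case: vc1 => _; case: vc2 => _; rewrite !size_Hc //; lia.
rewrite eN in m2.
have rot := canon_rot vc1.
set X := r1 + d1 + d2.
pose m := r2 + (L - X %% L).
apply: reach_trans (m1 r1) _.
apply: reach_trans (rot m (r1 + d1)) _.
have -> : conc n r2 H2 = conc n (r1 + d1 + m + d2) H2.
  apply: conc_eqmod => //.
  have L0 : 0 < L by lia.
  have -> : r1 + d1 + m + d2 = X + r2 + (L - X %% L) by rewrite /m /X; lia.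
  have := divn_eq X L; have := ltn_pmod X L0.
  move: (X %/ L) (X %% L) => q rr hr eX.
  rewrite eX.
  have -> : q * L + rr + r2 + (L - rr) = q * L + (r2 + L) by lia.
  by rewrite modnMDl modnDr.
exact: m2.
Qed.

End Final.

Lemma main_irreducible (R : realFieldType) (L n : nat) (p q : nat -> R) :
  (1 <= L)%N -> (1 <= n)%N -> (n < L)%N ->
  (forall k, (k < n)%N -> (0 < p k)%R) ->
  (forall k, (k < n)%N -> (0 < q k)%R) ->
  ctmc_irreducible L n p q.
Proof.
move=> _ n0 nL hp hq x y Ox Oy.
have he : forall a b, Omega L n a -> ST n a b -> (fun a b => (0 < rate p q n a b)%R) a b.
  by move=> a b Oa hs; apply: rate_pos => //; apply: (Omega_size_pos n0 Oa).
exact: (reach_all he n0 nL Ox Oy).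
Qed.


Theorem proposition4p1 (R : realFieldType) (L n : nat) (p q : nat -> R) :
  (1 <= L)%N -> (1 <= n)%N -> (n < L)%N ->
  (forall k, (k < n)%N -> (0 < p k)%R) ->
  (forall k, (k < n)%N -> (0 < q k)%R) ->
  ctmc_irreducible L n p q.
Proof. exact: main_irreducible. Qed.
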